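(* Let $G$ be a compact group with Haar probability measure $dg$, acting linearly and continuously on a finite-dimensional real vector space $V$. Fix $v\in V$ and a linear function $\ell:V\to\mathbb{R}$, and let $f(g)=\ell(gv)$. For a positive integer $k$, let $$D_k=\dim \operatorname{span}\{g v^{\otimes k}: g\in G\}$$ be the dimension of the linear span of the orbit of $v^{\otimes k}$ in $V^{\otimes k}$. Then $$\|f\|_{2k}\le \|f\|_\infty\le D_k^{1/(2k)}\,\|f\|_{2k}.$$
   Context: $V^{\otimes k}$ is the $k$-th tensor power of $V$, with $G$ acting diagonally: $g(v_1\otimes\cdots\otimes v_k)=gv_1\otimes\cdots\otimes gv_k$; $v^{\otimes k}=v\otimes\cdots\otimes v$ ($k$ factors). For $f:G\to\mathbb{R}$, $\|f\|_\infty=\max_{g\in G}|f(g)|$ and $\|f\|_{2k}=\left(\int_G f^{2k}(g)\,dg\right)^{1/(2k)}$. *)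

(* Defs.v *)
From HB Require Import structures.
From mathcomp Require Import all_boot all_order all_algebra.
From mathcomp Require Import all_classical all_reals all_analysis.
Set Implicit Arguments. Unset Strict Implicit. Unset Printing Implicit Defensive.
Import Order.TTheory GRing.Theory Num.Theory.
Import numFieldTopology.Exports numFieldNormedType.Exports.
Local Open Scope classical_set_scope.
Local Open Scope ring_scope.

Definition borel_of (G : ptopologicalType) := g_sigma_algebraType (@open G).

Record compact_group (G : ptopologicalType) (mul : G -> G -> G) (inv : G -> G)
    (e : G) : Prop := CompactGroup {
  cg_mulA : associative mul;
  cg_mul1g : left_id e mul;
  cg_mulVg : forall x, mul (inv x) x = e;
  cg_mul_cont : continuous (fun p : G * G => mul p.1 p.2);
  cg_inv_cont : continuous inv;
  cg_hausdorff : hausdorff_space G;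
  cg_compact : compact [set: G] }.

Definition haar_probability (R : realType) (G : ptopologicalType)
    (mul : G -> G -> G) (mu : probability (borel_of G) R) : Prop :=
  forall (g : G) (A : set (borel_of G)), measurable A ->
    mu (mul g @^-1` A) = mu A.

Definition cont_lin_action (R : realType) (G : ptopologicalType)
    (mul : G -> G -> G) (e : G) (n : nat) (rho : G -> 'M[R]_n) : Prop :=
  [/\ forall g h, rho (mul g h) = rho g *m rho h,
      rho e = 1%:M &
      continuous (fun p : G * 'cV[R]_n => rho p.1 *m p.2)].

(* The k-th tensor power V^{(x)k} of V = R^n, with the standard basis
   indexed by k-tuples of indices. *)
Definition tensor_pow (R : realType) (n k : nat) :=
  {ffun k.-tuple 'I_n -> R^o}.

Definition tpow (R : realType) (n k : nat) (w : 'cV[R]_n) : tensor_pow R n k :=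
  [ffun i : k.-tuple 'I_n => \prod_(j < k) w (tnth i j) ord0].

Definition tact (R : realType) (G : Type) (n k : nat) (rho : G -> 'M[R]_n)
    (g : G) (v : 'cV[R]_n) : tensor_pow R n k :=
  tpow k (rho g *m v).

Definition is_orbit_span (R : realType) (G : Type) (n k : nat)
    (rho : G -> 'M[R]_n) (v : 'cV[R]_n) (U : {vspace tensor_pow R n k}) : Prop :=
  (forall g, tact k rho g v \in U) /\
  (forall W : {vspace tensor_pow R n k},
      (forall g, tact k rho g v \in W) -> (U <= W)%VS).

(* ||f||_infty = max_{g in G} |f g| (as a supremum; it is attained when f is
   continuous and G compact). *)
Definition sup_norm (R : realType) (G : Type) (f : G -> R) : R :=
  sup [set `|f g| | g in [set: G]].

Definition norm2k (R : realType) (G : ptopologicalType)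
    (mu : probability (borel_of G) R) (k : nat) (f : G -> R) : R :=
  powR (fine (\int[mu]_(g in [set: borel_of G]) ((f g) ^+ (2 * k))%:E))
       ((2 * k)%:R^-1).

(* Main.v *)
Require Import Defs.
From HB Require Import structures.
From mathcomp Require Import all_boot all_order all_algebra.
From mathcomp Require Import all_classical all_reals all_analysis.
From mathcomp Require Import measurable_realfun.
Set Implicit Arguments. Unset Strict Implicit. Unset Printing Implicit Defensive.
Import Order.TTheory GRing.Theory Num.Theory.
Import numFieldTopology.Exports numFieldNormedType.Exports.
Local Open Scope classical_set_scope.
Local Open Scope ring_scope.

Section Aux.
Context (R : realType) (G : ptopologicalType).

Lemma open_meas (A : set G) : open A -> measurable (A : set (borel_of G)).
Proof. by move=> oA; apply: sub_sigma_algebra. Qed.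

Lemma cont_meas (f : G -> R) : continuous f ->
  measurable_fun (setT : set (borel_of G)) f.
Proof.
move=> cf; apply: (measurability _ (measurable_realfun.RGenOpens.measurableE R)).
move=> _ [_ [a [b ->]] <-]; rewrite setTI; apply: open_meas.
by apply: (proj1 (continuousP f) cf); exact: interval_open.
Qed.

Lemma cont_meas_G (f : G -> G) : continuous f ->
  measurable_fun (setT : set (borel_of G)) (f : borel_of G -> borel_of G).
Proof.
move=> cf; apply: (@measurability _ _ (borel_of G) (borel_of G) setT f (@open G)).
  by [].
move=> _ [A oA <-]; rewrite setTI; apply: open_meas.
exact: (proj1 (continuousP f) cf).
Qed.

Lemma cont_bounded (f : G -> R) : compact [set: G] -> continuous f ->
  exists M, forall g, `|f g| <= M.
Proof.
move=> cG cf.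
have : compact (f @` [set: G]).
  by apply: continuous_compact => //; exact: continuous_subspaceT.
move=> /(@compact_bounded R R^o) [M [_ HM]].
exists (`|M| + 1) => g; apply: (HM (`|M| + 1)); last by exists g.
by rewrite (le_lt_trans (ler_norm M)) // ltrDl.

Qed.

Context (mu : probability (borel_of G) R).

Lemma cont_int (f : G -> R) : compact [set: G] -> continuous f ->
  mu.-integrable setT (EFin \o f).
Proof.
move=> cG cf; apply: measurable_bounded_integrable => //.
- by have := probability_setT mu; rewrite /= => ->; rewrite ltry.
- exact: cont_meas.
have [M HM] := cont_bounded cG cf.
exists M; split; first by rewrite num_real.
by move=> x Mx y _; apply: le_trans (HM y) (ltW Mx).
Qed.

End Aux.
Section Grp.
Context (G : Type) (mul : G -> G -> G) (inv : G -> G) (e : G).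
Hypotheses (mulA : associative mul) (mul1g : left_id e mul)
  (mulVg : forall x, mul (inv x) x = e).
Lemma grp_mulgV x : mul x (inv x) = e.
Proof.
have H1 : mul (inv x) (mul x (inv x)) = inv x by rewrite mulA mulVg mul1g.
rewrite -[mul x _]mul1g -(mulVg (inv x)) -mulA H1 //.
Qed.
Lemma grp_mulg1 x : mul x e = x.
Proof. by rewrite -(mulVg x) mulA grp_mulgV mul1g. Qed.
End Grp.

Section Aux2.
Context (R : realType) (G : ptopologicalType) (mu : probability (borel_of G) R).
Context (mul : G -> G -> G) (inv : G -> G) (e : G).
Hypotheses (CG : compact_group mul inv e) (HH : haar_probability mul mu).

Lemma mul_contl h : continuous (mul h).
Proof.
have := cg_mul_cont CG => c x.
apply: (@continuous_comp _ _ _ (fun y => (h, y)) (fun p : G * G => mul p.1 p.2)).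
  by apply: cvg_pair; [exact: cvg_cst | exact: cvg_id].
exact: c.
Qed.

Lemma Rint_transl h (psi : G -> R) : continuous psi ->
  \int[mu]_g psi (mul h g) = \int[mu]_g psi g.
Proof.
move=> cpsi.
have mh := cont_meas_G (@mul_contl h).
have cG := cg_compact CG.
rewrite /Rintegral; congr fine.
have -> : (\int[mu]_(x in setT) (psi (mul h x))%:E =
    \int[mu]_(x in (mul h) @^-1` setT) ((EFin \o psi) \o mul h) x)%E by [].
rewrite -(@integral_pushforward _ _ (borel_of G) (borel_of G) R (mul h : borel_of G -> borel_of G) mh mu setT (EFin \o psi)) //.
- apply: eq_measure_integral => A mA _.
  exact: (HH h mA).
- by apply/measurable_EFinP; exact: cont_meas.
- apply: (@cont_int R G mu (psi \o mul h) cG) => x.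
  by apply: continuous_comp; [exact: mul_contl | exact: cpsi].
Qed.
End Aux2.
Section Aux3.
Context (R : realType) (G : ptopologicalType) (mu : probability (borel_of G) R).
Context (mul : G -> G -> G) (inv : G -> G) (e : G).
Hypotheses (CG : compact_group mul inv e) (HH : haar_probability mul mu).

Lemma pos_open (O : set G) (o : G) : open O -> O o -> (0 < mu O)%E.
Proof.
move=> oO Oo.
have mO : measurable (O : set (borel_of G)) := open_meas oO.
rewrite lt0e measure_ge0 andbT; apply/negP => /eqP O0.
have cov : [set: G] `<=` cover [set: G] (fun x => mul x @^-1` O).
  move=> y _; exists (mul o (inv y)) => //=.
  by rewrite -(cg_mulA CG) (cg_mulVg CG) (grp_mulg1 (cg_mulA CG) (cg_mul1g CG) (cg_mulVg CG)).
have cG := cg_compact CG; rewrite compact_cover in cG.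
have [D' _ cD] := cG G [set: G] (fun x => mul x @^-1` O)
   (fun i _ => proj1 (continuousP _) (@mul_contl G mul inv e CG i) O oO) cov.
pose s : seq G := finmap.enum_fset D'.
pose F k : set (borel_of G) := mul (nth o s k) @^-1` O.
have negF : forall k, mu.-negligible (F k).
  move=> k; exists (F k); split => //.
  - have := @cont_meas_G G _ (@mul_contl G mul inv e CG (nth o s k)).
    by move=> /(_ measurableT O mO); rewrite setTI.
  - by rewrite /F HH.
have [N [mN N0 sN]] := negligible_bigcup negF.
have NT : N = setT.
  apply/seteqP; split => // y _; apply: sN.
  have [i Di yi] := cD y I.
  exists (index i s) => //; rewrite /F nth_index //.
have := probability_setT mu; rewrite -NT N0 => /eqP; rewrite eq_sym.
by rewrite eqe oner_eq0.
Qed.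

Lemma full_support (psi : G -> R) : continuous psi -> (forall g, 0 <= psi g) ->
  \int[mu]_g psi g = 0 -> forall g, psi g = 0.
Proof.
move=> cpsi psi0 I0 h; apply/eqP; rewrite eq_le psi0 andbT leNgt.
apply/negP => hpos.
pose c := psi h / 2.
have c0 : 0 < c by rewrite divr_gt0.
pose O := psi @^-1` [set y | c < y].
have oO : open O := proj1 (continuousP _) cpsi _ (@open_gt R c).
have Oh : O h by rewrite /O /= /c ltr_pdivrMr // ltr_pMr // ltr1n.
have mO : measurable (O : set (borel_of G)) := open_meas oO.
have pO := pos_open oO Oh.
have cG := cg_compact CG.
have intp := cont_int mu cG cpsi.
have fin := integrable_fin_num measurableT intp.
have le : (c%:E * mu O <= \int[mu]_(x in setT) (EFin \o psi) x)%E.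
  rewrite -(setIT O) -integral_indic //.
  rewrite -ge0_integralZl_EFin //; last 2 first.
  - by apply/measurable_EFinP; exact: measurable_indic.
  - exact: ltW.
  apply: (@ge0_le_integral _ (borel_of G) R mu setT measurableT).
  - by move=> x _; rewrite -EFinM lee_fin mulr_ge0 // ?(ltW c0) // indicE; case: (x \in O).
  - by apply/measurable_EFinP; apply: measurable_funM => //; exact: measurable_indic.
  - by apply/measurable_EFinP; exact: cont_meas.
  - move=> x _; rewrite /= -EFinM lee_fin indicE.
    case: (boolP (x \in O)) => [/set_mem Ox|_]; first by rewrite mulr1 ltW.
    by rewrite mulr0.
move: I0; rewrite /Rintegral => I0.
have : (0 < \int[mu]_(x in setT) (EFin \o psi) x)%E.
  by apply: lt_le_trans le; rewrite mule_gt0.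
by rewrite -(fineK fin) /= I0 ltxx.
Qed.
End Aux3.
From mathcomp Require Import ring lra.

Lemma CS (R : realFieldType) m (x y : nat -> R) :
  (\sum_(i < m) x i * y i) ^+ 2 <= (\sum_(i < m) y i ^+ 2) * (\sum_(i < m) x i ^+ 2).
Proof.
set c := \sum_(i < m) y i ^+ 2; set s := \sum_(i < m) x i * y i.
set q := \sum_(i < m) x i ^+ 2.
have H : 0 <= \sum_(i < m) (c * x i - s * y i) ^+ 2 by apply: sumr_ge0 => i _; exact: sqr_ge0.
have E : forall i : 'I_m, (c * x i - s * y i) ^+ 2 =
   c ^+ 2 * x i ^+ 2 + (- (2 * c * s)) * (x i * y i) + s ^+ 2 * y i ^+ 2.
  by move=> i; ring.
rewrite (eq_bigr _ (fun i _ => E i)) !big_split /= -!mulr_sumr -/c -/s -/q in H.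
have c0 : 0 <= c by apply: sumr_ge0 => i _; exact: sqr_ge0.
have [cpos|] := ltP 0 c.
  have : 0 <= c * (c * q - s ^+ 2).
    by rewrite (_ : c * (c * q - s ^+ 2) = c ^+ 2 * q + - (2 * c * s) * s + s ^+ 2 * c) //; ring.
  by rewrite pmulr_rge0 // subr_ge0.
move=> cle; have c00 : c = 0 by apply/eqP; rewrite eq_le cle c0.
have y0 : forall i : 'I_m, y i = 0.
  move=> i; apply/eqP; rewrite -sqrf_eq0; apply/eqP.
  by move: c00 => /psumr_eq0P; apply => // j _; exact: sqr_ge0.
have -> : s = 0 by rewrite /s big1 // => i _; rewrite y0 mulr0.
by rewrite c00 expr0n /= mul0r.
Qed.
Section Core.
Context (R : realType) (G : ptopologicalType) (mu : probability (borel_of G) R).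
Context (mul : G -> G -> G) (inv : G -> G) (e : G).
Hypotheses (CG : compact_group mul inv e) (HH : haar_probability mul mu).

Lemma cD (f g : G -> R) : continuous f -> continuous g ->
  continuous (fun x => f x + g x).
Proof. by move=> cf cg x; exact: (@continuousD R R^o G f g x (cf x) (cg x)). Qed.
Lemma cM (f g : G -> R) : continuous f -> continuous g ->
  continuous (fun x => f x * g x).
Proof. by move=> cf cg x; exact: (@continuousM R G f g x (cf x) (cg x)). Qed.
Lemma cK (c : R) : continuous (fun _ : G => c).
Proof. exact: cst_continuous. Qed.
Lemma cS m (F : nat -> G -> R) : (forall i, continuous (F i)) ->
  continuous (fun x => \sum_(i < m) F i x).
Proof.
move=> cF; elim: m => [|m IH].
  have -> : (fun x => \sum_(i < 0) F i x) = (fun=> 0) by apply/funext => x; rewrite big_ord0.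
  exact: cK.
have -> : (fun x => \sum_(i < m.+1) F i x) = (fun x => \sum_(i < m) F i x + F m x).
  by apply/funext => x; rewrite big_ord_recr.
exact: cD.
Qed.

Lemma RiD (f g : G -> R) : continuous f -> continuous g ->
  \int[mu]_x (f x + g x) = \int[mu]_x f x + \int[mu]_x g x.
Proof. by move=> cf cg; apply: RintegralD => //; exact: (cont_int mu (cg_compact CG)). Qed.
Lemma RiZ (c : R) (f : G -> R) : continuous f -> \int[mu]_x (c * f x) = c * \int[mu]_x f x.
Proof. by move=> cf; apply: RintegralZl => //; exact: (cont_int mu (cg_compact CG)). Qed.
Lemma RiK (c : R) : \int[mu]_x c = c.
Proof. by rewrite Rintegral_cst //; have := probability_setT mu; rewrite /= => ->; rewrite mulr1. Qed.
Lemma RiS m (F : nat -> G -> R) : (forall i, continuous (F i)) ->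
  \int[mu]_x (\sum_(i < m) F i x) = \sum_(i < m) \int[mu]_x F i x.
Proof.
move=> cF; elim: m => [|m IH].
  under eq_Rintegral do rewrite big_ord0.
  by rewrite RiK big_ord0.
under eq_Rintegral do rewrite big_ord_recr /=.
by rewrite RiD ?IH ?big_ord_recr //; exact: cS.
Qed.
Lemma Rile (f g : G -> R) : continuous f -> continuous g -> (forall x, f x <= g x) ->
  \int[mu]_x f x <= \int[mu]_x g x.
Proof.
by move=> cf cg fg; apply: le_Rintegral => //; exact: (cont_int mu (cg_compact CG)).
Qed.
Variable P : (G -> R) -> Prop.
Hypothesis PC : forall f, P f -> continuous f.
Hypothesis Plin : forall f g (c : R), P f -> P g -> P (fun x => f x + c * g x).
Hypothesis P0 : P (fun _ => 0).
Hypothesis Ptr : forall h f, P f -> P (fun x => f (mul h x)).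
Variable D : nat.

Definition Bf (f g : G -> R) := \int[mu]_x (f x * g x).
Definition ON m (s : nat -> G -> R) :=
  (forall i, P (s i)) /\
  (forall i j, (i < m)%N -> (j < m)%N -> Bf (s i) (s j) = (i == j)%:R).
Hypothesis Hdim : forall m s, ON m s -> (m <= D)%N.

Lemma PZ (c : R) f : P f -> P (fun x => c * f x).
Proof.
move=> Pf; have := @Plin _ _ c P0 Pf.
by have -> : (fun x => 0 + c * f x) = (fun x => c * f x) by apply/funext => x; rewrite add0r.
Qed.

Lemma Psum m (x : nat -> R) (s : nat -> G -> R) : (forall i, P (s i)) ->
  P (fun g => \sum_(i < m) x i * s i g).
Proof.
move=> Ps; elim: m => [|m IH].
  by have -> : (fun g => \sum_(i < 0) x i * s i g) = (fun=> 0) by apply/funext => g; rewrite big_ord0.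
have -> : (fun g => \sum_(i < m.+1) x i * s i g) =
    (fun g => \sum_(i < m) x i * s i g + x m * s m g).
  by apply/funext => g; rewrite big_ord_recr.
exact: Plin.
Qed.

Lemma BfC f g : Bf f g = Bf g f.
Proof. by apply: eq_Rintegral => x _; rewrite mulrC. Qed.

Lemma BfD f1 f2 g (c : R) : continuous f1 -> continuous f2 -> continuous g ->
  Bf (fun x => f1 x + c * f2 x) g = Bf f1 g + c * Bf f2 g.
Proof.
move=> c1 c2 cg; rewrite /Bf.
under eq_Rintegral do rewrite mulrDl -mulrA.
by rewrite RiD ?RiZ //; repeat first [assumption | exact: cK | apply: cM].
Qed.

Lemma BfS m (x : nat -> R) (s : nat -> G -> R) g :
  (forall i, continuous (s i)) -> continuous g ->
  Bf (fun y => \sum_(i < m) x i * s i y) g = \sum_(i < m) x i * Bf (s i) g.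
Proof.
move=> cs cg; rewrite /Bf.
under eq_Rintegral do rewrite mulr_suml.
under eq_Rintegral do under eq_bigr do rewrite -mulrA.
rewrite (@RiS m (fun i y => x i * (s i y * g y))); last first.
  by move=> i; apply: cM; [exact: cK|exact: cM].
by apply: eq_bigr => i _; rewrite RiZ //; exact: cM.
Qed.

Lemma sum_delta m (x : nat -> R) j : (j < m)%N ->
  \sum_(i < m) x i * ((i : nat) == j)%:R = x j.
Proof.
move=> jm; rewrite (bigD1 (Ordinal jm)) //= eqxx mulr1 big1 ?addr0 //.
move=> i /eqP ij; case: eqP => [ij'|]; last by rewrite mulr0.
by exfalso; apply: ij; apply: val_inj.
Qed.

Lemma ex_max : exists m s, ON m s /\ (forall s', ~ ON m.+1 s').
Proof.
pose Q n := `[< exists s, ON n s >].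
have ex0 : exists n, Q n.
  exists 0%N; apply/asboolP; exists (fun _ _ => 0); split => // i.
have ub : forall n, Q n -> (n <= D)%N.
  by move=> n /asboolP [s Hs]; exact: Hdim Hs.
case: (ex_maxnP ex0 ub) => m; rewrite {1}/Q => /asboolP [s Hs] Hmax.
exists m, s; split => // s' Hs'.
have : (m.+1 <= m)%N by apply: Hmax; rewrite /Q; apply/asboolP; exists s'.
by rewrite ltnn.
Qed.

Lemma expand m s : ON m s -> (forall s', ~ ON m.+1 s') ->
  forall f, P f -> forall g, f g = \sum_(i < m) Bf f (s i) * s i g.
Proof.
move=> [Ps Bs] Hmax f Pf.
have cs : forall i, continuous (s i) by move=> i; exact: PC.
have cf := PC Pf.
pose x i := Bf f (s i).
pose r := fun g => f g + (-1) * (\sum_(i < m) x i * s i g).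
have Pr : P r := @Plin _ _ (-1) Pf (@Psum m x s Ps).
have cr := PC Pr.
have rs : forall j, (j < m)%N -> Bf r (s j) = 0.
  move=> j jm; rewrite /r BfD //; last exact: PC (@Psum m x s Ps).
  rewrite BfS //.
  under eq_bigr => i _ do rewrite Bs //.
  by rewrite sum_delta // /x mulN1r subrr.
have Brr0 : Bf r r = 0.
  apply/eqP; rewrite eq_le; apply/andP; split; last first.
    by apply: Rintegral_ge0 => y _; rewrite -expr2 sqr_ge0.
  rewrite leNgt; apply/negP => Bpos.
  pose t := fun g => (Num.sqrt (Bf r r))^-1 * r g.
  have Pt : P t := @PZ _ _ Pr.
  have ct := PC Pt.
  have sq0 : Num.sqrt (Bf r r) != 0 by rewrite gt_eqF // sqrtr_gt0.
  have Btt : Bf t t = 1.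
    rewrite /t /Bf.
    under eq_Rintegral do rewrite mulrACA.
    rewrite RiZ; last by apply: cM.
    rewrite -/(Bf r r) -invrM ?unitfE // -expr2 sqr_sqrtr ?ltW //.
    by rewrite mulVf // gt_eqF.
  have Bts : forall j, (j < m)%N -> Bf t (s j) = 0.
    move=> j jm; rewrite /t /Bf.
    under eq_Rintegral do rewrite -mulrA.
    rewrite RiZ; last by apply: cM.
    by rewrite -/(Bf r (s j)) rs // mulr0.
  pose s' := fun i => if i == m then t else s i.
  apply: (Hmax s'); split.
  - move=> i; rewrite /s'; case: (i == m); [exact: Pt | exact: Ps].
  - move=> i j Hi Hj; rewrite /s'.
    case: (eqVneq i m) => [Ei|im]; case: (eqVneq j m) => [Ej|jm];
      rewrite ?Ei ?Ej.
    + by rewrite eqxx Btt.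
    + rewrite Bts; last by rewrite ltn_neqAle jm -ltnS.
      by rewrite eq_sym (negbTE jm).
    + rewrite BfC Bts; last by rewrite ltn_neqAle im -ltnS.
      by rewrite (negbTE im).
    + rewrite Bs //.
      * by rewrite ltn_neqAle im -ltnS.
      * by rewrite ltn_neqAle jm -ltnS.
move=> g.
have r0 : forall y, 0 <= r y * r y by move=> y; rewrite -expr2 sqr_ge0.
have := @full_support R G mu mul inv e CG HH (fun y => r y * r y) (cM cr cr) r0 Brr0 g.
move=> /eqP; rewrite mulf_eq0 orbb /r mulN1r subr_eq0 => /eqP ->.
by [].
Qed.

Lemma bound m s : ON m s -> (forall s', ~ ON m.+1 s') ->
  forall f, P f -> forall g, f g ^+ 2 <= (\sum_(i < m) s i g ^+ 2) * Bf f f.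
Proof.
move=> Hs Hmax f Pf g.
have [Ps Bs] := Hs.
have cs : forall i, continuous (s i) by move=> i; exact: PC.
have cf := PC Pf.
have E := expand Hs Hmax Pf.
pose x i := Bf f (s i).
have Bff : Bf f f = \sum_(i < m) x i ^+ 2.
  have -> : Bf f f = Bf (fun y => \sum_(i < m) x i * s i y) f.
    by apply: eq_Rintegral => y _; rewrite -E.
  rewrite BfS //; apply: eq_bigr => i _; by rewrite BfC expr2.
rewrite Bff (E g); exact: (CS m x (fun i => s i g)).
Qed.

Lemma csum_transl m s : ON m s -> (forall s', ~ ON m.+1 s') ->
  forall h g, \sum_(i < m) s i (mul h g) ^+ 2 <= \sum_(i < m) s i g ^+ 2.
Proof.
move=> Hs Hmax h g.
have [Ps Bs] := Hs.
have cs : forall i, continuous (s i) by move=> i; exact: PC.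
pose t i := fun y => s i (mul h y).
have Pt : forall i, P (t i) by move=> i; exact: Ptr.
have ct : forall i, continuous (t i) by move=> i; exact: PC.
have Bt : forall i j, (i < m)%N -> (j < m)%N -> Bf (t i) (t j) = (i == j)%:R.
  move=> i j im jm; rewrite -Bs // /Bf /t.
  by rewrite (@Rint_transl R G mu mul inv e CG HH h (fun y => s i y * s j y)) //; exact: cM.
pose y i := t i g.
pose psi := fun z => \sum_(i < m) y i * t i z.
have Ppsi : P psi := @Psum m y t Pt.
have cpsi := PC Ppsi.
have psig : psi g = \sum_(i < m) s i (mul h g) ^+ 2.
  by apply: eq_bigr => i _; rewrite expr2.
have Bti : forall i, (i < m)%N -> Bf (t i) psi = y i.
  move=> i im; rewrite BfC BfS //.
  under eq_bigr => j _ do rewrite Bt //.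
  by rewrite (eq_bigr (fun j : 'I_m => y j * ((j : nat) == i)%:R)) ?sum_delta // => j _; rewrite eq_sym.
have Bpp : Bf psi psi = \sum_(i < m) s i (mul h g) ^+ 2.
  rewrite {1}/psi BfS //; rewrite -psig; apply: eq_bigr => i _; by rewrite Bti.
have := bound Hs Hmax Ppsi g; rewrite psig Bpp.
set S := \sum_(i < m) s i (mul h g) ^+ 2.
set C := \sum_(i < m) s i g ^+ 2.
have S0 : 0 <= S by apply: sumr_ge0 => i _; exact: sqr_ge0.
have C0 : 0 <= C by apply: sumr_ge0 => i _; exact: sqr_ge0.
have [Spos|] := ltP 0 S; last by move=> SC _; apply: le_trans SC C0.
by rewrite expr2 ler_pM2r.
Qed.

Lemma main_bound f h : P f -> f h ^+ 2 <= D%:R * Bf f f.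
Proof.
move=> Pf.
have [m [s [Hs Hmax]]] := ex_max.
have [Ps Bs] := Hs.
have cs : forall i, continuous (s i) by move=> i; exact: PC.
pose C := fun g => \sum_(i < m) s i g ^+ 2.
have cs2 : forall i, continuous (fun x => s i x ^+ 2).
  move=> i; have -> : (fun x => s i x ^+ 2) = (fun x => s i x * s i x) by apply/funext => x; rewrite expr2.
  exact: cM.
have cC : continuous C := @cS m (fun i x => s i x ^+ 2) cs2.
have Ch : forall g, C h <= C g.
  move=> g.
  have -> : h = mul (mul h (inv g)) g.
    by rewrite -(cg_mulA CG) (cg_mulVg CG) (grp_mulg1 (cg_mulA CG) (cg_mul1g CG) (cg_mulVg CG)).
  exact: csum_transl.
have Cm : C h <= m%:R.
  have -> : m%:R = \int[mu]_g C g.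
    rewrite /C (@RiS m (fun i x => s i x ^+ 2) cs2).
    have -> : m%:R = \sum_(i < m) (1 : R) by rewrite sumr_const card_ord.
    apply: eq_bigr => i _; have := Bs i i (ltn_ord i) (ltn_ord i).
    rewrite eqxx /Bf => E1; rewrite -[LHS]/(true%:R) -E1.
    by apply: eq_Rintegral => x _; rewrite expr2.
  rewrite -[C h]RiK; apply: Rile => //; exact: cK.
have Bff0 : 0 <= Bf f f by apply: Rintegral_ge0 => y _; rewrite -expr2 sqr_ge0.
apply: le_trans (bound Hs Hmax Pf h) _.
apply: ler_wpM2r => //; apply: le_trans Cm _.
by rewrite ler_nat; exact: Hdim Hs.
Qed.
End Core.

Lemma prod_sum_tuple (R : comRingType) k n (F : 'I_k -> 'I_n -> R) :
  \prod_(j < k) \sum_(s < n) F j s =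
  \sum_(t : k.-tuple 'I_n) \prod_(j < k) F j (tnth t j).
Proof.
rewrite bigA_distr_bigA /=.
rewrite (reindex (fun t : k.-tuple 'I_n => [ffun j => tnth t j])) /=.
  by apply: eq_bigr => t _; apply: eq_bigr => j _; rewrite ffunE.
exists (fun f : {ffun 'I_k -> 'I_n} => [tuple f j | j < k]) => [t _|f _].
  by apply: eq_from_tnth => j; rewrite tnth_mktuple ffunE.
by apply/ffunP => j; rewrite ffunE tnth_mktuple.
Qed.

Lemma tpow_mul (R : realType) n k (M : 'M[R]_n) (w : 'cV[R]_n) (t : k.-tuple 'I_n) :
  tpow k (M *m w) t =
  \sum_(t' : k.-tuple 'I_n) (\prod_(j < k) M (tnth t j) (tnth t' j)) * tpow k w t'.
Proof.
rewrite /tpow ffunE.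
under eq_bigr => j _ do rewrite mxE.
rewrite prod_sum_tuple; apply: eq_bigr => t' _; rewrite ffunE -big_split /=.
by [].
Qed.

Definition dotT (R : realType) n k (a x : tensor_pow R n k) : R :=
  \sum_t a t * x t.

Lemma cP_seq (R : realType) (G : ptopologicalType) (I : Type) (r : seq I)
  (F : I -> G -> R) : (forall j, continuous (F j)) ->
  continuous (fun g => \prod_(j <- r) F j g).
Proof.
move=> cF; elim: r => [|j r IH].
  have -> : (fun g => \prod_(j <- [::]) F j g) = (fun=> 1) by apply/funext => g; rewrite big_nil.
  exact: cK.
have -> : (fun g => \prod_(i <- j :: r) F i g) = (fun g => F j g * \prod_(i <- r) F i g).
  by apply/funext => g; rewrite big_cons.
exact: cM.
Qed.

Lemma cS_seq (R : realType) (G : ptopologicalType) (I : Type) (r : seq I)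
  (F : I -> G -> R) : (forall j, continuous (F j)) ->
  continuous (fun g => \sum_(j <- r) F j g).
Proof.
move=> cF; elim: r => [|j r IH].
  have -> : (fun g => \sum_(j <- [::]) F j g) = (fun=> 0) by apply/funext => g; rewrite big_nil.
  exact: cK.
have -> : (fun g => \sum_(i <- j :: r) F i g) = (fun g => F j g + \sum_(i <- r) F i g).
  by apply/funext => g; rewrite big_cons.
exact: cD.
Qed.

Section Inst.
Context (R : realType) (G : ptopologicalType) (mul : G -> G -> G) (inv : G -> G)
  (e : G) (mu : probability (borel_of G) R) (n : nat) (rho : G -> 'M[R]_n)
  (v : 'cV[R]_n) (k : nat).
Hypotheses (CG : compact_group mul inv e) (HH : haar_probability mul mu)
  (HA : cont_lin_action mul e rho).

Definition Pk (f : G -> R) :=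
  exists a : tensor_pow R n k, forall g, f g = dotT a (tact k rho g v).

Lemma cont_coord i : continuous (fun g => (rho g *m v) i ord0).
Proof.
have [_ _ c] := HA.
have c2 : continuous (fun g : G => rho g *m v).
  move=> y.
  have h1 : {for y, continuous (fun g : G => (g, v))}.
    exact: (cvg_pair cvg_id (cvg_cst v)).
  exact: (continuous_comp h1 (c (y, v))).
move=> x.
exact: (continuous_comp (c2 x) (@coord_continuous R n 1 i ord0 _)).
Qed.

Lemma Pk_cont f : Pk f -> continuous f.
Proof.
move=> [a Ha].
have -> : f = (fun g => \sum_(t <- index_enum (k.-tuple 'I_n)) a t *
     \prod_(j <- index_enum 'I_k) (rho g *m v) (tnth t j) ord0).
  by apply/funext => g; rewrite Ha /dotT; apply: eq_bigr => t _; rewrite /tact /tpow ffunE.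
apply: cS_seq => t; apply: cM; first exact: cK.
by apply: cP_seq => j; exact: cont_coord.
Qed.

Lemma Pk_lin f g (c : R) : Pk f -> Pk g -> Pk (fun x => f x + c * g x).
Proof.
move=> [a Ha] [b Hb]; exists [ffun t => a t + c * b t] => x.
rewrite Ha Hb /dotT mulr_sumr -big_split /=; apply: eq_bigr => t _.
by rewrite !ffunE; ring.
Qed.

Lemma Pk0 : Pk (fun=> 0).
Proof.
by exists [ffun => 0] => x; rewrite /dotT big1 // => t _; rewrite ffunE mul0r.
Qed.

Lemma Pk_tr h f : Pk f -> Pk (fun x => f (mul h x)).
Proof.
move=> [a Ha].
exists [ffun t' => \sum_t a t * \prod_(j < k) rho h (tnth t j) (tnth t' j)] => x.
rewrite Ha /dotT /tact.
have [Hm _ _] := HA.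
rewrite Hm -mulmxA.
under eq_bigr => t _ do rewrite tpow_mul mulr_sumr.
rewrite exchange_big /=; apply: eq_bigr => t' _.
by rewrite [X in _ = X * _]ffunE mulr_suml; apply: eq_bigr => t _; rewrite mulrA.
Qed.


Lemma Pk_fk (l : {linear 'cV[R]_n -> R^o}) :
  Pk (fun g => l (rho g *m v) ^+ k).
Proof.
pose c (s : 'I_n) := l (delta_mx s ord0).
exists [ffun t : k.-tuple 'I_n => \prod_(j < k) c (tnth t j)] => g.
set w := rho g *m v.
have lw : l w = \sum_(s < n) c s * w s ord0.
  rewrite {1}(matrix_sum_delta w) linear_sum; apply: eq_bigr => s _.
  by rewrite big_ord1 linearZ /= mulrC.
rewrite lw.
have -> : (\sum_(s < n) c s * w s ord0) ^+ k = \prod_(j < k) (\sum_(s < n) c s * w s ord0).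
  by rewrite prodr_const card_ord.
rewrite (prod_sum_tuple (fun (j : 'I_k) s => c s * w s ord0)) /dotT /tact /tpow; apply: eq_bigr => t _.
by rewrite !ffunE -big_split /=; apply: eq_bigr => j _; rewrite mulrC.
Qed.

Lemma dotT_lin (a : tensor_pow R n k) m (c : 'I_m -> R) (b : 'I_m -> tensor_pow R n k) :
  dotT a (\sum_(j < m) c j *: b j) = \sum_(j < m) c j * dotT a (b j).
Proof.
rewrite /dotT.
under eq_bigr => t _ do rewrite sum_ffunE mulr_sumr.
rewrite exchange_big /=; apply: eq_bigr => j _.
rewrite mulr_sumr; apply: eq_bigr => t _.
rewrite [X in _ * X = _](_ : _ = c j * b j t); first by rewrite mulrCA.
first [ by rewrite ffunE | by [] | by rewrite /GRing.scale /= ffunE | by rewrite /GRing.scale /= /ffun_scale ffunE].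
Qed.

Lemma Hdim_inst (U : {vspace tensor_pow R n k}) : is_orbit_span rho v U ->
  forall m s, ON mu Pk m s -> (m <= \dim U)%N.
Proof.
move=> [HU _] m s [Ps Bs].
have [a Ha] := choice Ps.
have cs : forall i, continuous (s i) by move=> i; exact: Pk_cont.
rewrite leqNgt; apply/negP => Hlt.
pose b := vbasis U.
pose M : 'M[R]_(m, \dim U) := \matrix_(i, j) dotT (a i) b`_j.
have Knz : kermx M != 0.
  rewrite -mxrank_eq0 mxrank_ker -lt0n subn_gt0.
  exact: leq_ltn_trans (rank_leq_col M) Hlt.
have /existsP [i0 Hi0] : [exists i, row i (kermx M) != 0].
  rewrite -negb_forall; apply: contra Knz => /forallP H.
  apply/eqP/row_matrixP => i; rewrite row0; apply/eqP.
  exact: H.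
pose lam := row i0 (kermx M).
have lamM : lam *m M = 0 by rewrite -row_mul mulmx_ker row0.
have /existsP [j0 Hj0] : [exists j, lam 0 j != 0].
  rewrite -negb_forall; apply: contra Hi0 => /forallP H.
  apply/eqP/rowP => j; rewrite [RHS]mxE; apply/eqP; move: (H j); by rewrite /lam mxE.
pose x (p : nat) := oapp (fun i => lam 0 i) 0 (insub p : option 'I_m).
have xE : forall i : 'I_m, x i = lam 0 i by move=> i; rewrite /x valK.
pose phi := fun g => \sum_(i < m) x i * s i g.
have phi0 : forall g, phi g = 0.
  move=> g; rewrite /phi.
  have ug := coord_vbasis (HU g).
  under eq_bigr => i _ do rewrite (Ha i) ug dotT_lin.
  under eq_bigr => i _ do rewrite mulr_sumr.
  rewrite exchange_big /=; apply: big1 => j1 _.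
  have : (lam *m M) 0 j1 = 0 by rewrite lamM mxE.
  rewrite mxE => H0.
  apply: (@eq_trans _ _ (coord b j1 (tact k rho g v) * \sum_(i < m) lam 0 i * M i j1)); last first.
    by rewrite H0 mulr0.
  rewrite mulr_sumr; apply: eq_bigr => i _; rewrite xE !mxE /b; ring.
have : Bf mu phi (s j0) = 0.
  rewrite /Bf; under eq_Rintegral do rewrite phi0 mul0r.
  by rewrite RiK.
rewrite (BfS mu CG) //.
have -> : \sum_(i < m) x i * Bf mu (s i) (s j0) = \sum_(i < m) x i * ((i : nat) == j0)%:R.
  by apply: eq_bigr => i _; rewrite Bs.
rewrite sum_delta // xE => /eqP.
by rewrite (negbTE Hj0).
Qed.
End Inst.

Lemma powR_root (R : realType) (a : R) (N : nat) : 0 <= a -> (0 < N)%N ->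
  powR (a ^+ N) (N%:R^-1) = a.
Proof.
move=> a0 N0; rewrite -powR_mulrn // -powRrM mulfV ?powRr1 //.
by rewrite pnatr_eq0 -lt0n.
Qed.

Unset Implicit Arguments.

Theorem corollary1p4 (R : realType) (G : ptopologicalType)
    (mul : G -> G -> G) (inv : G -> G) (e : G)
    (mu : probability (borel_of G) R) (n : nat) (rho : G -> 'M[R]_n)
    (v : 'cV[R]_n) (l : {linear 'cV[R]_n -> R^o}) (k : nat)
    (U : {vspace tensor_pow R n k}) :
  compact_group mul inv e ->
  haar_probability mul mu ->
  cont_lin_action mul e rho ->
  (0 < k)%N ->
  is_orbit_span rho v U ->
  let f := fun g : G => l (rho g *m v) in
  norm2k mu k f <= sup_norm f /\
  sup_norm f <= powR (\dim U)%:R ((2 * k)%:R^-1) * norm2k mu k f.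
Proof.
move=> CG HH HA k0 HU f.
have Pf : Pk rho v k (fun g => f g ^+ k) := Pk_fk rho v k l.
have cfk : continuous (fun g => f g ^+ k) := Pk_cont HA Pf.
have MB := fun h => main_bound CG HH (Pk_cont HA) (fun f g c => @Pk_lin _ _ _ rho v k f g c) (Pk0 rho v k)
   (Pk_tr HA) (Hdim_inst CG HA HU) h Pf.
set I := \int[mu]_g (f g ^+ (2 * k)).
have BI : Bf mu (fun g => f g ^+ k) (fun g => f g ^+ k) = I.
  by apply: eq_Rintegral => g _; rewrite -exprD addnn -mul2n.
have I0 : 0 <= I.
  by apply: Rintegral_ge0 => g _; rewrite mulnC exprM sqr_ge0.
have N0 : (0 < 2 * k)%N by rewrite muln_gt0.
have ubd : forall h, `|f h| <= powR (\dim U)%:R ((2 * k)%:R^-1) * norm2k mu k f.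
  move=> h; have := MB h; rewrite BI -exprM mulnC => H.
  rewrite /norm2k -/(Rintegral mu setT _) -/I.
  rewrite -powRM ?ler0n //.
  rewrite -[X in X <= _](powR_root (normr_ge0 (f h)) N0).
  apply: ge0_ler_powR; rewrite ?nnegrE ?invr_ge0 ?ler0n ?exprn_ge0 ?mulr_ge0 ?ler0n //.
  by rewrite -normrX ger0_norm // mulnC exprM sqr_ge0.
have ne : [set `|f g| | g in [set: G]] !=set0 by exists `|f point|; exists point.
have supub : sup_norm f <= powR (\dim U)%:R ((2 * k)%:R^-1) * norm2k mu k f.
  by apply: ge_sup => // _ [g _ <-]; exact: ubd.
split => //.
have hs : has_sup [set `|f g| | g in [set: G]].
  split => //; exists (powR (\dim U)%:R ((2 * k)%:R^-1) * norm2k mu k f).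
  by move=> _ [g _ <-]; exact: ubd.
have fS : forall g, `|f g| <= sup_norm f.
  by move=> g; apply: sup_upper_bound => //; exists g.
have S0 : 0 <= sup_norm f by apply: le_trans (fS point).
have IS : I <= sup_norm f ^+ (2 * k).
  rewrite -[X in _ <= X](RiK mu).
  rewrite /I; apply: (@Rile _ _ mu _ _ _ CG).
  - have -> : (fun g => f g ^+ (2 * k)) = (fun g => f g ^+ k * f g ^+ k).
      by apply/funext => g; rewrite -exprD addnn -mul2n.
    exact: cM.
  - exact: cK.
  - move=> g; rewrite -[f g ^+ _]ger0_norm ?normrX; last by rewrite mulnC exprM sqr_ge0.
    by apply: lerXn2r => //; rewrite nnegrE.
rewrite /norm2k -/(Rintegral mu setT _) -/I.
rewrite -[X in _ <= X](powR_root S0 N0).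
by apply: ge0_ler_powR; rewrite ?nnegrE ?invr_ge0 ?ler0n ?exprn_ge0.
Qed.
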